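(* Let Problem A be \[ \min_{d,\{t_n\},\{E_n\}}\ \sum_{n=1}^N E_n\left(1+\frac{h_n}{g_n}\right)+\frac{\kappa L^3(D-d)^3}{T^2} \] subject to \[ d\le \sum_{n=1}^N t_nW\ln\left(1+\frac{E_nh_n}{t_n\sigma^2W}\right),\qquad 2\sum_{n=1}^N t_n\le T-\frac{Ld}{f_B},\qquad 0\le d\le D,\quad E_n\ge0,\ t_n\ge0\ \ \forall n. \] Let Problem B be \[ \min_{d,t,\{P_n\},\{w_n\}}\ \sum_{n=1}^N P_nt\left(1+\frac{h_n}{g_n}\right)+\frac{\kappa L^3(D-d)^3}{T^2} \] subject to \[ d\le \sum_{n=1}^N tw_n\ln\left(1+\frac{P_nh_n}{\sigma^2w_n}\right),\qquad 2t\le T-\frac{Ld}{f_B},\qquad \sum_{n=1}^N w_n\le W, \] \[ 0\le d\le D,\quad t\ge0,\quad P_n\ge0,\ w_n\ge 0\ \ \forall n. \] Then Problem A and Problem B are mathematically equivalent. In particular, both can be reformulated as the same optimization problem: \[ \min_{d,\{r_n\},\{E_n\}}\ \sum_{n=1}^N E_n\left(1+\frac{h_n}{g_n}\right)+\frac{\kappa L^3(D-d)^3}{T^2} \] subject to \[ d=\sum_{n=1}^N r_n\ln\left(1+\frac{E_nh_n}{\sigma^2 r_n}\right),\qquad 2\sum_{n=1}^N r_n=W\left(T-\frac{Ld}{f_B}\right),\qquad 0\le d\le D,\ E_n,r_n\ge 0. \] For Problem A this reformulation uses $r_n=t_nW$; for Problem B it uses $E_n=P_nt$ and $r_n=w_nt$.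 Consequently, the two problems have the same minimal objective value.
   Context: All parameters $N, h_n, g_n, W, \sigma^2, \kappa, L, D, T, f_B$ are given positive constants, and $n$ ranges over $\{1,\dots,N\}$. Terms of the form $x\ln(1+y/x)$ are interpreted as $0$ when $x=0$. *)

(* Defs.v *)
From HB Require Import structures.
From mathcomp Require Import all_boot all_order all_algebra.
From mathcomp Require Import reals exp.
Set Implicit Arguments. Unset Strict Implicit. Unset Printing Implicit Defensive.
Import Order.TTheory GRing.Theory Num.Theory.
Local Open Scope ring_scope.

Section Problems.
Variables (R : realType) (N : nat) (h g : 'I_N -> R)
          (W sigma kappa L D T fB : R).

Definition comp_cost (d : R) : R := kappa * L ^+ 3 * (D - d) ^+ 3 / T ^+ 2.

Definition objA (d : R) (t E : 'I_N -> R) : R :=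
  \sum_(n < N) E n * (1 + h n / g n) + comp_cost d.

Definition rateA (t E : 'I_N -> R) (n : 'I_N) : R :=
  if t n == 0 then 0
  else t n * W * ln (1 + E n * h n / (t n * sigma ^+ 2 * W)).

Definition feasA (d : R) (t E : 'I_N -> R) : Prop :=
  [/\ d <= \sum_(n < N) rateA t E n,
      2 * \sum_(n < N) t n <= T - L * d / fB,
      0 <= d <= D &
      forall n, 0 <= E n /\ 0 <= t n].

Definition objB (d t : R) (P w : 'I_N -> R) : R :=
  \sum_(n < N) P n * t * (1 + h n / g n) + comp_cost d.

Definition rateB (t : R) (P w : 'I_N -> R) (n : 'I_N) : R :=
  if w n == 0 then 0
  else t * w n * ln (1 + P n * h n / (sigma ^+ 2 * w n)).

Definition feasB (d t : R) (P w : 'I_N -> R) : Prop :=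
  [/\ d <= \sum_(n < N) rateB t P w n,
      2 * t <= T - L * d / fB,
      \sum_(n < N) w n <= W,
      0 <= d <= D &
      0 <= t /\ forall n, 0 <= P n /\ 0 <= w n].

Definition objC (d : R) (r E : 'I_N -> R) : R :=
  \sum_(n < N) E n * (1 + h n / g n) + comp_cost d.

Definition rateC (r E : 'I_N -> R) (n : 'I_N) : R :=
  if r n == 0 then 0
  else r n * ln (1 + E n * h n / (sigma ^+ 2 * r n)).

Definition feasC (d : R) (r E : 'I_N -> R) : Prop :=
  [/\ d = \sum_(n < N) rateC r E n,
      2 * \sum_(n < N) r n = W * (T - L * d / fB),
      0 <= d <= D &
      forall n, 0 <= E n /\ 0 <= r n].

End Problems.

(* Main.v *)
Require Import Defs.
From HB Require Import structures.
From mathcomp Require Import all_boot all_order all_algebra.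
From mathcomp Require Import reals sequences exp convex interval_inference.
From mathcomp Require Import ring lra.
Set Implicit Arguments. Unset Strict Implicit. Unset Printing Implicit Defensive.
Import Order.TTheory GRing.Theory Num.Theory.
Local Open Scope ring_scope.

Lemma ln_conc (R : realType) (l a b : R) : 0 <= l -> l <= 1 -> 0 < a -> 0 < b ->
  l * ln a + (1 - l) * ln b <= ln (l * a + (1 - l) * b).
Proof.
move=> l0 l1 a0 b0.
have := @concave_ln R (Itv01 l0 l1) a b a0 b0.
by rewrite !convRE /=.
Qed.

Definition qf (R : realType) (r x : R) : R :=
  if r == 0 then 0 else r * ln (1 + x / r).

Lemma qf_ge0 (R : realType) (r x : R) : 0 <= r -> 0 <= x -> 0 <= qf r x.
Proof.
move=> r0 x0; rewrite /qf; case: eqP => // rn0.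
have rp : 0 < r by rewrite lt_neqAle eq_sym; apply/andP; split=> //; apply/eqP.
apply: mulr_ge0; first exact: ltW.
by apply: ln_ge0; rewrite lerDl divr_ge0 // ltW.
Qed.

Lemma mono_qf (R : realType) (r r' x : R) : 0 <= r -> r <= r' -> 0 <= x ->
  qf r x <= qf r' x.
Proof.
move=> r0 rr x0; have [->|rn0] := eqVneq r 0.
  rewrite /qf eqxx; apply: qf_ge0 => //; exact: le_trans rr.
have rp : 0 < r by rewrite lt_neqAle eq_sym rn0.
have rp' : 0 < r' by exact: lt_le_trans rr.
rewrite /qf (negbTE rn0) (gt_eqF rp').
set l := r / r'.
have l0 : 0 <= l by rewrite divr_ge0 // ltW.
have l1 : l <= 1 by rewrite ler_pdivrMr // mul1r.
have a0 : 0 < 1 + x / r by rewrite ltr_wpDr // divr_ge0 // ltW.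
have := ln_conc l0 l1 a0 ltr01.
rewrite ln1 mulr0 addr0.
have -> : l * (1 + x / r) + (1 - l) * 1 = 1 + x / r'.
  rewrite /l; field; by rewrite ?gt_eqF.
move=> H.
have -> : r * ln (1 + x / r) = r' * (l * ln (1 + x / r)).
  rewrite /l mulrA mulrCA divff ?gt_eqF // mulr1 //.
by rewrite ler_wpM2l // ltW.
Qed.

Lemma rateC_qf (R : realType) (N : nat) (h : 'I_N -> R) (sigma : R) r E n :
  0 < sigma ->
  rateC h sigma r E n = qf (r n) (E n * h n / sigma ^+ 2).
Proof.
move=> s0; rewrite /rateC /qf; case: eqP => // /eqP rn0.
congr (_ * ln (1 + _)); field.
by rewrite rn0 gt_eqF.
Qed.

Lemma reduceC (R : realType) (N : nat) (h : 'I_N -> R) (W sigma L D T fB : R)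
  (HN : (0 < N)%N) (Hh : forall n, 0 < h n) (Hsigma : 0 < sigma)
  (c : 'I_N -> R) (Hc : forall n, 0 < c n) (d : R) (r0 E0 : 'I_N -> R) :
  0 <= d <= D -> d <= \sum_(n < N) rateC h sigma r0 E0 n ->
  2 * \sum_(n < N) r0 n <= W * (T - L * d / fB) ->
  (forall n, 0 <= E0 n /\ 0 <= r0 n) ->
  exists r E, feasC h W sigma L D T fB d r E /\
    \sum_(n < N) E n * c n <= \sum_(n < N) E0 n * c n.
Proof.
move=> /andP[d0 dD] dle Hs HE0.
pose i0 : 'I_N := Ordinal HN.
pose dl := (W * (T - L * d / fB) - 2 * \sum_(n < N) r0 n) / 2.
have dl0 : 0 <= dl by rewrite /dl divr_ge0 // subr_ge0.
pose r := fun n => r0 n + (if n == i0 then dl else 0).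
have rr0 : forall n, r0 n <= r n.
  by move=> n; rewrite /r lerDl; case: eqP.
have r0n : forall n, 0 <= r0 n by move=> n; case: (HE0 n).
have E0n : forall n, 0 <= E0 n by move=> n; case: (HE0 n).
have rn : forall n, 0 <= r n by move=> n; exact: le_trans (rr0 n).
have s2 : 0 < sigma ^+ 2 by rewrite exprn_gt0.
have xn : forall n, 0 <= E0 n * h n / sigma ^+ 2.
  by move=> n; rewrite divr_ge0 ?mulr_ge0 // ltW.
pose S := \sum_(n < N) rateC h sigma r E0 n.
have rate0 : forall n, 0 <= rateC h sigma r E0 n.
  by move=> n; rewrite rateC_qf // qf_ge0.
have dS : d <= S.
  apply: (le_trans dle); apply: ler_sum => n _.
  by rewrite !rateC_qf // mono_qf.
have S0 : 0 <= S by exact: le_trans dS.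
have dS1 : d / S <= 1.
  have [->|Sn0] := eqVneq S 0; first by rewrite invr0 mulr0.
  by rewrite ler_pdivrMr ?mul1r // lt_neqAle eq_sym Sn0.
pose tg := fun n => d / S * rateC h sigma r E0 n.
have tg0 : forall n, 0 <= tg n by move=> n; rewrite mulr_ge0 ?divr_ge0.
have tgle : forall n, tg n <= rateC h sigma r E0 n.
  by move=> n; rewrite /tg ler_piMl.
pose E := fun n => if r n == 0 then 0
  else (expR (tg n / r n) - 1) * sigma ^+ 2 * r n / h n.
exists r, E; split; first split.
- rewrite (eq_bigr tg).
    rewrite /tg -mulr_sumr -/S.
    have [S0'|Sn0] := eqVneq S 0.
      by rewrite S0' mulr0; apply/eqP; rewrite eq_le d0 andbT -S0' dS.
    by rewrite mulfVK.
  move=> n _; rewrite /rateC /E /tg; case: eqP => [rz|/eqP rnz].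
    by rewrite /rateC rz eqxx mulr0.
  have -> : (expR (d / S * rateC h sigma r E0 n / r n) - 1) * sigma ^+ 2 * r n
      / h n * h n / (sigma ^+ 2 * r n) = expR (d / S * rateC h sigma r E0 n / r n) - 1.
    field. by rewrite rnz !gt_eqF // ?Hh.
  by rewrite addrC subrK expRK mulrCA divff // mulr1.
- have sumdl : \sum_(n < N) (if n == i0 then dl else 0) = dl.
    by rewrite (bigD1 i0) //= ?eqxx big1 ?addr0 // => i /negbTE ->.
  by rewrite big_split /= sumdl /dl mulrDr [2 * (_ / 2)]mulrC divfK ?pnatr_eq0 // addrC subrK.
- by rewrite d0 dD.
- move=> n; split; last exact: rn.
  rewrite /E; case: eqP => // /eqP rnz.
  have rp : 0 < r n by rewrite lt_neqAle eq_sym rnz rn.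
  rewrite divr_ge0 ?mulr_ge0 ?(ltW rp) ?(ltW s2) ?(ltW (Hh n)) ?(ltW Hsigma) //.
  by rewrite subr_ge0 -expR0 ler_expR divr_ge0 // ltW.
- apply: ler_sum => n _; rewrite ler_wpM2r ?(ltW (Hc n)) //.
  rewrite /E; case: eqP => // /eqP rnz.
  have rp : 0 < r n by rewrite lt_neqAle eq_sym rnz rn.
  have := tgle n; rewrite /rateC (negbTE rnz) => H.
  have : tg n / r n <= ln (1 + E0 n * h n / (sigma ^+ 2 * r n)).
    by rewrite ler_pdivrMr // mulrC.
  rewrite -ler_expR lnK; last first.
    by rewrite posrE ltr_wpDr // divr_ge0 ?mulr_ge0 ?(ltW rp) ?(ltW s2) ?(ltW (Hh n)) ?(ltW Hsigma).
  move=> H2.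
  rewrite ler_pdivrMr // -ler_pdivlMr ?mulr_gt0 //.
  rewrite -ler_pdivlMr // lerBlDl.
  apply: (le_trans H2); rewrite lerD2l; rewrite le_eqVlt; apply/orP; left; apply/eqP.
  have sn : sigma != 0 by rewrite gt_eqF.
  by field; rewrite rnz sn.
Qed.

Theorem lemma6 (R : realType) (N : nat) (h g : 'I_N -> R)
    (W sigma kappa L D T fB : R)
    (HN : (0 < N)%N) (Hh : forall n, 0 < h n) (Hg : forall n, 0 < g n)
    (HW : 0 < W) (Hsigma : 0 < sigma) (Hkappa : 0 < kappa) (HL : 0 < L)
    (HD : 0 < D) (HT : 0 < T) (HfB : 0 < fB) :
  (* A -> C : every feasible point of A is matched by a point of C no worse *)
  (forall d t E, feasA h W sigma L D T fB d t E ->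
     exists d' r E', feasC h W sigma L D T fB d' r E' /\
       objC h g kappa L D T d' r E' <= objA h g kappa L D T d t E) /\
  (* C -> A *)
  (forall d r E, feasC h W sigma L D T fB d r E ->
     exists d' t E', feasA h W sigma L D T fB d' t E' /\
       objA h g kappa L D T d' t E' <= objC h g kappa L D T d r E) /\
  (* B -> C *)
  (forall d t P w, feasB h W sigma L D T fB d t P w ->
     exists d' r E', feasC h W sigma L D T fB d' r E' /\
       objC h g kappa L D T d' r E' <= objB h g kappa L D T d t P w) /\
  (* C -> B *)
  (forall d r E, feasC h W sigma L D T fB d r E ->
     exists d' t P w, feasB h W sigma L D T fB d' t P w /\
       objB h g kappa L D T d' t P w <= objC h g kappa L D T d r E).
Proof.
have Hc : forall n, 0 < 1 + h n / g n by move=> n; rewrite ltr_wpDr // divr_ge0 // ltW.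
have sn : sigma != 0 by rewrite gt_eqF.
have Wn : W != 0 by rewrite gt_eqF.
split; [|split; [|split]].
- move=> d t E [dle Hs dD HE].
  have H1 : d <= \sum_(n < N) rateC h sigma (fun n => t n * W) E n.
    apply: (le_trans dle); rewrite le_eqVlt; apply/orP; left; apply/eqP.
    apply/eq_bigr => n _.
    rewrite /rateA /rateC mulf_eq0 (negbTE Wn) orbF.
    case: eqP => // /eqP tn.
    have -> : t n * sigma ^+ 2 * W = sigma ^+ 2 * (t n * W) by ring.
    by [].
  have H2 : 2 * \sum_(n < N) t n * W <= W * (T - L * d / fB).
    by rewrite -mulr_suml mulrA mulrC ler_wpM2l // ltW.
  have H3 : forall n, 0 <= E n /\ 0 <= t n * W.
    move=> n; have [E0 t0] := HE n; split => //; apply: mulr_ge0 => //; exact: ltW.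
  have [r [E' [HC Hle]]] := @reduceC R N h W sigma L D T fB HN Hh Hsigma _ Hc d
     (fun n => t n * W) E dD H1 H2 H3.
  exists d, r, E'; split => //.
  by rewrite /objC /objA lerD2r.
- move=> d r E [deq Hs dD HE].
  exists d, (fun n => r n / W), E; split; last by rewrite /objC /objA.
  split => //.
  + rewrite deq le_eqVlt; apply/orP; left; apply/eqP.
    apply/eq_bigr => n _.
    rewrite /rateA /rateC mulf_eq0 invr_eq0 (negbTE Wn) orbF.
    case: eqP => // /eqP rn.
    rewrite divfK //.
    have -> : r n / W * sigma ^+ 2 * W = sigma ^+ 2 * r n by field.
    by [].
  + rewrite -mulr_suml mulrA Hs mulrC mulrA mulVf // mul1r; exact: lexx.
  + move=> n; have [E0 r0] := HE n; split => //; apply: divr_ge0 => //; exact: ltW.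
- move=> d t P w [dle Hs Hw dD [t0 HPw]].
  have H1 : d <= \sum_(n < N) rateC h sigma (fun n => w n * t) (fun n => P n * t) n.
    apply: (le_trans dle); rewrite le_eqVlt; apply/orP; left; apply/eqP.
    apply/eq_bigr => n _.
    rewrite /rateB /rateC mulf_eq0.
    have [wz|wnz] := eqVneq (w n) 0; first by rewrite wz.
    rewrite /=.
    have [tz|tnz] := eqVneq t 0; first by rewrite tz ?eqxx ?orbT ?mul0r ?mulr0.
    rewrite /=.
    have -> : P n * t * h n / (sigma ^+ 2 * (w n * t)) = P n * h n / (sigma ^+ 2 * w n).
      by field; rewrite wnz tnz sn.
    by rewrite (mulrC t).
  have H2 : 2 * \sum_(n < N) (w n * t) <= W * (T - L * d / fB).
    rewrite -mulr_suml; apply: (@le_trans _ _ (W * (2 * t))).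
      rewrite [W * _]mulrCA ler_wpM2l // ler_wpM2r //.
    by rewrite ler_wpM2l // ltW.
  have H3 : forall n, 0 <= P n * t /\ 0 <= w n * t.
    by move=> n; have [P0 w0] := HPw n; split; apply: mulr_ge0.
  have [r [E' [HC Hle]]] := @reduceC R N h W sigma L D T fB HN Hh Hsigma _ Hc d
     (fun n => w n * t) (fun n => P n * t) dD H1 H2 H3.
  exists d, r, E'; split => //.
  by rewrite /objC /objB lerD2r.
- move=> d r E [deq Hs dD HE].
  have two0 : (2:R) != 0 by rewrite pnatr_eq0.
  have r0 : forall n, 0 <= r n by move=> n; case: (HE n).
  have E0 : forall n, 0 <= E n by move=> n; case: (HE n).
  have sr0 : 0 <= \sum_(n < N) r n by apply: sumr_ge0.
  set X := T - L * d / fB in Hs *.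
  have X0 : 0 <= X.
    by rewrite -(pmulr_rge0 X HW) -Hs mulr_ge0.
  pose tau := X / 2.
  have sumr : \sum_(n < N) r n = W * tau.
    by apply: (mulfI two0); rewrite Hs /tau; field.
  have [tz|tnz] := eqVneq tau 0.
  + have rz : forall n, r n = 0.
      move=> n; apply: (@psumr_eq0P _ _ predT r (fun i _ => r0 i)) => //.
      by rewrite sumr tz mulr0.
    have dz : d = 0.
      by rewrite deq big1 // => n _; rewrite /rateC rz eqxx.
    exists d, 0, (fun _ => 0), (fun _ => 0); split.
    * split.
      - by rewrite dz; apply: sumr_ge0 => n _; rewrite /rateB eqxx.
      - by rewrite mulr0.
      - by rewrite big1 // ltW.
      - by [].
      - by split => //.
    * rewrite /objB /objC lerD2r big1; last by move=> n _; rewrite !mul0r.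
      by apply: sumr_ge0 => n _; apply: mulr_ge0 => //; apply: ltW.
  + have tp : 0 < tau by rewrite lt_neqAle eq_sym tnz divr_ge0.
    exists d, tau, (fun n => E n / tau), (fun n => r n / tau); split.
    * split.
      - rewrite deq le_eqVlt; apply/orP; left; apply/eqP.
        apply/eq_bigr => n _.
        rewrite /rateB /rateC mulf_eq0 invr_eq0 (negbTE tnz) orbF.
        case: eqP => // /eqP rn.
        have -> : E n / tau * h n / (sigma ^+ 2 * (r n / tau)) = E n * h n / (sigma ^+ 2 * r n).
          by field; rewrite rn tnz sn.
        by rewrite (mulrC tau (r n / tau)) divfK.
      - by rewrite /tau mulrC divfK.
      - by rewrite -mulr_suml sumr mulfK.
      - by [].
      - by split; [exact: ltW | move=> n; split; apply: divr_ge0 => //; exact: ltW].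
    * rewrite /objB /objC lerD2r; apply: ler_sum => n _; rewrite divfK //.
Qed.
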